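(* Consider a main effect plan on $n$ runs with factors $F_1,\dots,F_m$ ($m\ge 2$), every level of every factor occurring, which is orthogonal through $F_m$, i.e. $N_{ij}=N_{im}R_m^{-1}N_{mj}$ for all distinct $i,j\in\{1,\dots,m-1\}$. Then: (a) for every $i\in\{1,\dots,m-1\}$, with $\bar i=\{1,\dots,m+1\}\setminus\{i\}$, one has $C_{i;\bar i}=R_i-N_{im}R_m^{-1}N_{im}'$ and $Q_{i;\bar i}=T_i-N_{im}R_m^{-1}T_m$, so the reduced normal equation $C_{i;\bar i}\widehat{\alpha^i}=Q_{i;\bar i}$ for $\alpha^i$ reads $(R_i-N_{im}R_m^{-1}N_{im}')\widehat{\alpha^i}=T_i-N_{im}R_m^{-1}T_m$; (b) the error sum of squares satisfies $$SS_E=SS_{tot}-\sum_{j=1}^{m-1}SS_{j;\{m,m+1\}}-SS_{m;\{m+1\}}.$$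
   Context: Model: $Y=\mathbf 1_n\mu+\sum_{i=1}^m X_i\alpha^i+\epsilon$ with uncorrelated homoscedastic errors, where $X_i$ is the $n\times a_i$ 0-1 design matrix of $F_i$ ($(u,t)$ entry $1$ iff $F_i$ is at level $t$ in run $u$); $X_{m+1}=\mathbf 1_n$. $N_{ij}=X_i'X_j$, $r_i=X_i'\mathbf 1_n$, $R_i=\mathrm{diag}(r_i)$, $T_i=X_i'Y$ (vector of level totals of $F_i$). $P_S$ is the orthogonal projector onto the column space of $[X_j]_{j\in S}$ for $S\subseteq\{1,\dots,m+1\}$. For $i\notin T$: $C_{i;T}=X_i'(I-P_T)X_i$, $Q_{i;T}=X_i'(I-P_T)Y$, $SS_{i;T}=Q_{i;T}'(C_{i;T})^-Q_{i;T}$. $SS_{tot}=\sum_uY_u^2-(\sum_uY_u)^2/n$ and $SS_E=Y'(I-P_{\{1,\dots,m+1\}})Y$. *)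

(* Defs.v *)
From HB Require Import structures.
From mathcomp Require Import all_boot all_order all_algebra.
Set Implicit Arguments. Unset Strict Implicit. Unset Printing Implicit Defensive.
Import Order.TTheory GRing.Theory Num.Theory.
Local Open Scope ring_scope.

Section MainEffect.
Variables (R : realFieldType) (n m : nat) (a : 'I_m -> nat)
  (lev : forall i : 'I_m, 'I_n -> 'I_(a i)) (Y : 'cV[R]_n).

Definition desmx (i : 'I_m) : 'M[R]_(n, a i) :=
  \matrix_(u < n, t < a i) ((lev i u == t)%:R : R).

(* index set {1,...,m+1}: Some i is factor F_i, None is X_{m+1} = 1_n *)
Definition colsp (j : option 'I_m) : 'M[R]_n :=
  match j with
  | Some i => <<(desmx i)^T>>%MS
  | None => <<(const_mx 1 : 'M[R]_(1, n))>>%MS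
  end.

(* square matrix whose row space = column space of [X_j]_{j in S} (transposed) *)
Definition spanmx (S : {set option 'I_m}) : 'M[R]_n :=
  (\sum_(j in S) colsp j)%MS.

Definition projS (S : {set option 'I_m}) : 'M[R]_n :=
  let M := (spanmx S)^T in M *m pinvmx (M^T *m M) *m M^T.

Definition Nmx (i j : 'I_m) : 'M[R]_(a i, a j) := (desmx i)^T *m desmx j.
Definition rvec (i : 'I_m) : 'cV[R]_(a i) := (desmx i)^T *m const_mx 1.
Definition Rmx (i : 'I_m) : 'M[R]_(a i) := diag_mx (rvec i)^T.
Definition Tvec (i : 'I_m) : 'cV[R]_(a i) := (desmx i)^T *m Y.

Definition Cmx (i : 'I_m) (T : {set option 'I_m}) : 'M[R]_(a i) :=
  (desmx i)^T *m (1%:M - projS T) *m desmx i.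
Definition Qvec (i : 'I_m) (T : {set option 'I_m}) : 'cV[R]_(a i) :=
  (desmx i)^T *m (1%:M - projS T) *m Y.
(* SS_{i;T} = Q' C^- Q, with the generalized inverse C^- := pinvmx C
   (C *m pinvmx C *m C = C); the value does not depend on the g-inverse. *)
Definition SSi (i : 'I_m) (T : {set option 'I_m}) : R :=
  ((Qvec i T)^T *m pinvmx (Cmx i T) *m Qvec i T) 0 0.

Definition SStot : R :=
  \sum_(u < n) Y u 0 ^+ 2 - (\sum_(u < n) Y u 0) ^+ 2 / n%:R.
Definition SSE : R := (Y^T *m (1%:M - projS setT) *m Y) 0 0.

End MainEffect.

(* Main.v *)
Require Import Defs.
From HB Require Import structures.
From mathcomp Require Import all_boot all_order all_algebra.
Set Implicit Arguments. Unset Strict Implicit. Unset Printing Implicit Defensive.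
Import Order.TTheory GRing.Theory Num.Theory.
Local Open Scope ring_scope.
Definition prj (R : realFieldType) (n p : nat) (W : 'M[R]_(p, n)) : 'M[R]_n :=
  W^T *m pinvmx (W *m W^T) *m W.

Lemma mmT_eq0 (R : realFieldType) p q (D : 'M[R]_(p, q)) : D *m D^T = 0 -> D = 0.
Proof.
move=> H; apply/matrixP => i j.
have := congr1 (fun M : 'M[R]_p => M i i) H; rewrite !mxE => Hs.
have Hs' := psumr_eq0P _ Hs.
have Hj : D i j * D^T j i = 0.
  apply: Hs' => // k _; rewrite !mxE -expr2 sqr_ge0 //.
move: Hj; rewrite !mxE => /eqP; rewrite mulf_eq0 orbb => /eqP //.
Qed.

Lemma ginv_fix (R : realFieldType) n p (W : 'M[R]_(p, n)) (G : 'M[R]_p) :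
  W *m W^T *m G *m (W *m W^T) = W *m W^T -> W *m W^T *m G *m W = W.
Proof.
move=> H; apply/eqP; rewrite -subr_eq0; apply/eqP.
set D := _ - W.
have DW : D *m W^T = 0.
  by rewrite /D mulmxBl -(mulmxA _ W W^T) H subrr.
apply: mmT_eq0.
by rewrite {2}/D linearB /= trmx_mul mulmxBr mulmxA DW mul0mx subrr.
Qed.

Lemma ginv_tr (R : realFieldType) n p (W : 'M[R]_(p, n)) (G : 'M[R]_p) :
  W *m W^T *m G *m (W *m W^T) = W *m W^T ->
  W *m W^T *m G^T *m (W *m W^T) = W *m W^T.
Proof.
move=> H; have := congr1 trmx H; rewrite !trmx_mul !trmxK !mulmxA => ->.
by [].
Qed.

Lemma pinv_g (R : realFieldType) n p (W : 'M[R]_(p, n)) :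
  W *m W^T *m pinvmx (W *m W^T) *m (W *m W^T) = W *m W^T.
Proof. exact: mulmxKpV. Qed.

Lemma prj_sub (R : realFieldType) n p (W : 'M[R]_(p, n)) : (prj W <= W)%MS.
Proof. exact: submxMl. Qed.

Lemma prj_fixW (R : realFieldType) n p (W : 'M[R]_(p, n)) : W *m prj W = W.
Proof. by rewrite /prj mulmxA (mulmxA W W^T) (ginv_fix (pinv_g W)). Qed.

Lemma prj_fix (R : realFieldType) n p q (W : 'M[R]_(p, n)) (V : 'M[R]_(q, n)) :
  (V <= W)%MS -> V *m prj W = V.
Proof. by case/submxP=> D ->; rewrite -mulmxA prj_fixW. Qed.

Lemma ginv_sym (R : realFieldType) n p (W : 'M[R]_(p, n)) (G : 'M[R]_p) :
  W *m W^T *m G *m (W *m W^T) = W *m W^T -> W^T *m G^T *m W = W^T *m G *m W.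
Proof.
move=> H.
have H1 := ginv_fix (ginv_tr H).
have H2 : W^T *m G *m (W *m W^T) = W^T.
  by have := congr1 trmx H1; rewrite !trmx_mul !trmxK !mulmxA.
rewrite -{1}H2 -!mulmxA; congr (_ *m (_ *m _)); by rewrite !mulmxA H1.
Qed.

Lemma prj_sym (R : realFieldType) n p (W : 'M[R]_(p, n)) : (prj W)^T = prj W.
Proof.
rewrite /prj trmx_mul [(W^T *m _)^T]trmx_mul trmxK mulmxA.
exact: ginv_sym (pinv_g W).
Qed.

Lemma prj_ker (R : realFieldType) n p q (W : 'M[R]_(p, n)) (Z : 'M[R]_(n, q)) :
  W *m Z = 0 -> prj W *m Z = 0.
Proof. by move=> H; rewrite /prj -mulmxA H mulmx0. Qed.

Lemma prj_fixT (R : realFieldType) n p q (W : 'M[R]_(p, n)) (V : 'M[R]_(q, n)) :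
  (V <= W)%MS -> prj W *m V^T = V^T.
Proof. by move=> s; rewrite -prj_sym -trmx_mul prj_fix. Qed.

Lemma prj_idem (R : realFieldType) n p (W : 'M[R]_(p, n)) : prj W *m prj W = prj W.
Proof. exact/prj_fix/prj_sub. Qed.

Lemma prj_unique (R : realFieldType) n p (W : 'M[R]_(p, n)) (P : 'M[R]_n) :
  (P <= W)%MS -> W *m P = W -> P^T = P -> P = prj W.
Proof.
move=> sP fP tP.
have QP : prj W *m P = prj W.
  rewrite -[prj W in LHS](mulmxKpV (prj_sub W)) -(mulmxA (prj W *m pinvmx W) W P) fP.
  exact: (mulmxKpV (prj_sub W)).
have PQ : P *m prj W = P by rewrite prj_fix.
by rewrite -tP -PQ trmx_mul prj_sym tP QP.
Qed.

Lemma prj_eq (R : realFieldType) n p q (W : 'M[R]_(p, n)) (V : 'M[R]_(q, n)) :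
  (V <= W)%MS -> (W <= V)%MS -> prj V = prj W.
Proof.
move=> s1 s2; apply: prj_unique.
- exact: submx_trans (prj_sub V) s1.
- exact: prj_fix.
- exact: prj_sym.
Qed.

Lemma mul_prj0 (R : realFieldType) n p q (W : 'M[R]_(p, n)) (V : 'M[R]_(q, n)) :
  V *m W^T = 0 -> V *m prj W = 0.
Proof. by move=> H; rewrite /prj mulmxA (mulmxA V W^T) H !mul0mx. Qed.

Lemma prj_sum (R : realFieldType) n p (U : 'M[R]_(p, n)) (I : finType) (P : pred I)
  (q : I -> nat) (B : forall i, 'M[R]_(q i, n)) :
  (forall i, P i -> U *m (B i)^T = 0) ->
  (forall i j, P i -> P j -> i != j -> B i *m (B j)^T = 0) ->
  prj (U + \sum_(i | P i) <<B i>>)%MS = prj U + \sum_(i | P i) prj (B i).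
Proof.
move=> hU hB; symmetry; apply: prj_unique.
- apply: addmx_sub; first exact: submx_trans (prj_sub U) (addsmxSl _ _).
  apply: summx_sub => i Pi; apply: submx_trans (prj_sub (B i)) _.
  apply: submx_trans (addsmxSr _ _); apply: (sumsmx_sup i) => //.
  by rewrite genmxE.
- set S := _ + _.
  suff: ((U + \sum_(i | P i) <<B i>>)%MS <= kermx (S - 1%:M))%MS.
    by move/sub_kermxP; rewrite mulmxBr mulmx1 => /eqP; rewrite subr_eq0 => /eqP.
  rewrite addsmx_sub; apply/andP; split.
    rewrite sub_kermx mulmxBr mulmx1 mulmxDr prj_fixW mulmx_sumr big1 ?addr0 ?subrr //.
    by move=> i Pi; apply: mul_prj0; apply: hU.
  apply/sumsmx_subP => i Pi; rewrite genmxE sub_kermx mulmxBr mulmx1 mulmxDr.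
  rewrite mulmx_sumr (bigD1 i) //= prj_fixW big1 ?addr0.
    rewrite mul_prj0 ?add0r ?subrr //.
    by have := congr1 trmx (hU i Pi); rewrite trmx_mul trmxK trmx0.
  by move=> j /andP[Pj ji]; apply: mul_prj0; apply: hB => //; rewrite eq_sym.
- rewrite linearD /= linear_sum /= prj_sym; congr (_ + _).
  by apply: eq_bigr => i _; rewrite prj_sym.
Qed.
Lemma projSE (R : realFieldType) n m (a : 'I_m -> nat)
  (lev : forall i : 'I_m, 'I_n -> 'I_(a i)) S :
  projS R lev S = prj (spanmx R lev S).
Proof. by rewrite /projS /prj trmxK. Qed.

Lemma ones_X (R : realFieldType) n m (a : 'I_m -> nat)
  (lev : forall i : 'I_m, 'I_n -> 'I_(a i)) k :
  (const_mx 1 : 'M[R]_(1, n)) = const_mx 1 *m (desmx R lev k)^T.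
Proof.
apply/matrixP => i u; rewrite !mxE (bigD1 (lev k u)) //= big1 ?addr0.
  by rewrite !mxE eqxx mul1r.
by move=> t /negPf tn; rewrite !mxE eq_sym tn mulr0.
Qed.

Lemma XtX (R : realFieldType) n m (a : 'I_m -> nat)
  (lev : forall i : 'I_m, 'I_n -> 'I_(a i)) i :
  (desmx R lev i)^T *m desmx R lev i = Rmx R lev i.
Proof.
apply/matrixP => t t'; rewrite !mxE.
case: (eqVneq t t') => [->|tt].
  rewrite /= mulr1n; apply: eq_bigr => u _; rewrite !mxE mulr1.
  by case: (lev i u == t'); rewrite ?mulr1 ?mulr0.
rewrite /= mulr0n big1 // => u _; rewrite !mxE.
case: (eqVneq (lev i u) t) => [e|_]; last by rewrite mul0r.
by rewrite e (negPf tt) mulr0.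
Qed.

Lemma Rmx_unit (R : realFieldType) n m (a : 'I_m -> nat)
  (lev : forall i : 'I_m, 'I_n -> 'I_(a i)) k :
  (forall t : 'I_(a k), exists u : 'I_n, lev k u = t) ->
  Rmx R lev k \in unitmx.
Proof.
move=> hl; rewrite unitmxE det_diag unitfE; apply/prodf_neq0 => t _.
rewrite !mxE; apply/eqP => H0.
have [u0 hu0] := hl t.
have Hs' := psumr_eq0P _ H0.
have := Hs' ltac:(by move=> u ?; rewrite !mxE mulr1 ler0n) u0 isT.
rewrite !mxE hu0 eqxx mulr1 => H1.
have H2 : (1 : R) = 0 by exact: H1.
by move: (oner_neq0 R); rewrite H2 eqxx.
Qed.

Lemma genmx_ker (R : realFieldType) p n q (A : 'M[R]_(p, n)) (Z : 'M[R]_(n, q)) :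
  A *m Z = 0 -> <<A>>%MS *m Z = 0.
Proof. by move/sub_kermxP => h; apply/sub_kermxP; rewrite genmxE. Qed.

Lemma Rinv_tr (R : realFieldType) n m (a : 'I_m -> nat)
  (lev : forall i : 'I_m, 'I_n -> 'I_(a i)) k :
  (invmx (Rmx R lev k))^T = invmx (Rmx R lev k).
Proof. by rewrite trmx_inv /Rmx tr_diag_mx. Qed.

Lemma Ntr (R : realFieldType) n m (a : 'I_m -> nat)
  (lev : forall i : 'I_m, 'I_n -> 'I_(a i)) i j :
  (Nmx R lev i j)^T = Nmx R lev j i.
Proof. by rewrite /Nmx trmx_mul trmxK. Qed.

Lemma partA (R : realFieldType) n m (a : 'I_m -> nat)
  (lev : forall i : 'I_m, 'I_n -> 'I_(a i)) k
  (hU : Rmx R lev k \in unitmx)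
  (horth : forall i j : 'I_m, i != k -> j != k -> i != j ->
       Nmx R lev i j = Nmx R lev i k *m invmx (Rmx R lev k) *m Nmx R lev k j)
  i (ik : i != k) :
  projS R lev [set j | j != Some i] *m desmx R lev i
  = desmx R lev k *m invmx (Rmx R lev k) *m Nmx R lev k i.
Proof.
set X := desmx R lev; set Ri := invmx (Rmx R lev k).
set P := projS _ _ _.
have PE : P = prj (spanmx R lev [set j | j != Some i]) by rewrite /P projSE.
set Z := X i - X k *m Ri *m Nmx R lev k i.
have XZ : forall j, j != i -> (X j)^T *m Z = 0.
  move=> j ji; rewrite /Z mulmxBr (mulmxA (X j)^T) (mulmxA (X j)^T).
  rewrite -[(X j)^T *m X i]/(Nmx R lev j i) -[(X j)^T *m X k]/(Nmx R lev j k).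
  case: (eqVneq j k) => [->|jk].
    by rewrite /Nmx XtX mulmxV // mul1mx subrr.
  by rewrite (horth j i) // subrr.
have PZ : P *m Z = 0.
  rewrite PE; apply: prj_ker; apply/sub_kermxP/sumsmx_subP => j; rewrite inE => jS.
  apply/sub_kermxP; case: j jS => [j|] jS /=; apply: genmx_ker.
    by apply: XZ; apply: contra jS => /eqP ->.
  by rewrite (ones_X R lev k) -mulmxA XZ ?mulmx0 // eq_sym.
have PXk : P *m X k = X k.
  rewrite PE; have := prj_fixT (V := (X k)^T) (W := spanmx R lev [set j | j != Some i]).
  rewrite trmxK; apply; apply: (sumsmx_sup (Some k)); first by rewrite inE; apply/eqP => -[e]; move: ik; rewrite e eqxx.
  by rewrite /colsp genmxE.
have -> : X i = Z + X k *m Ri *m Nmx R lev k i by rewrite /Z subrK.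
by rewrite mulmxDr PZ add0r !mulmxA PXk.
Qed.

Lemma cprj_idem (R : realFieldType) n p (W : 'M[R]_(p, n)) :
  (1%:M - prj W) *m (1%:M - prj W) = 1%:M - prj W.
Proof.
by rewrite mulmxBl mul1mx mulmxBr mulmx1 prj_idem subrr subr0.
Qed.

Lemma cprj_sym (R : realFieldType) n p (W : 'M[R]_(p, n)) :
  (1%:M - prj W)^T = 1%:M - prj W.
Proof. by rewrite linearB /= trmx1 prj_sym. Qed.

Lemma SS_gen (R : realFieldType) n p q (W : 'M[R]_(p, n)) (X : 'M[R]_(n, q))
  (Y : 'cV[R]_n) :
  (X^T *m (1%:M - prj W) *m Y)^T *m pinvmx (X^T *m (1%:M - prj W) *m X)
     *m (X^T *m (1%:M - prj W) *m Y)
  = Y^T *m prj (X^T *m (1%:M - prj W)) *m Y.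
Proof.
set B := X^T *m (1%:M - prj W).
have BB : X^T *m (1%:M - prj W) *m X = B *m B^T.
  rewrite /B trmx_mul trmxK cprj_sym (mulmxA (X^T *m (1%:M - prj W)) (1%:M - prj W) X).
  by rewrite -(mulmxA X^T (1%:M - prj W) (1%:M - prj W)) cprj_idem.
rewrite BB /prj trmx_mul; move: (pinvmx _) => G.
by rewrite !mulmxA.
Qed.

Lemma SSi_E (R : realFieldType) n m (a : 'I_m -> nat)
  (lev : forall i : 'I_m, 'I_n -> 'I_(a i)) (Y : 'cV[R]_n) j T p (W : 'M[R]_(p, n)) :
  projS R lev T = prj W ->
  SSi lev Y j T = (Y^T *m prj ((desmx R lev j)^T *m (1%:M - prj W)) *m Y) 0 0.
Proof. by rewrite /SSi /Qvec /Cmx => ->; rewrite SS_gen. Qed.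

Lemma ones_sub (R : realFieldType) n m (a : 'I_m -> nat)
  (lev : forall i : 'I_m, 'I_n -> 'I_(a i)) k :
  ((const_mx 1 : 'M[R]_(1, n)) <= (desmx R lev k)^T)%MS.
Proof. by rewrite (ones_X R lev k) submxMl. Qed.

Lemma span_k1 (R : realFieldType) n m (a : 'I_m -> nat)
  (lev : forall i : 'I_m, 'I_n -> 'I_(a i)) k :
  projS R lev [set Some k; None] = prj (desmx R lev k)^T.
Proof.
rewrite projSE; apply: prj_eq.
- apply/sumsmx_subP => -[j|]; rewrite !inE /= genmxE ?ones_sub //.
  by case/orP => // /eqP [->].
- by apply: (sumsmx_sup (Some k)); rewrite ?inE ?eqxx //= genmxE.
Qed.

Lemma span_1 (R : realFieldType) n m (a : 'I_m -> nat)
  (lev : forall i : 'I_m, 'I_n -> 'I_(a i)) :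
  projS R lev [set None] = prj (const_mx 1 : 'M[R]_(1, n)).
Proof.
rewrite projSE; apply: prj_eq.
- apply/sumsmx_subP => -[j|]; rewrite !inE //= genmxE //.
- by apply: (sumsmx_sup None); rewrite ?inE ?eqxx //= genmxE.
Qed.

Lemma subB_sub (R : realFieldType) m1 m3 n (A B : 'M[R]_(m1, n)) (C : 'M[R]_(m3, n)) :
  (A <= C)%MS -> (B <= C)%MS -> ((A - B)%R <= C)%MS.
Proof. by move=> a b; apply: addmx_sub a _; rewrite eqmx_opp. Qed.

Lemma Pk_E (R : realFieldType) n m (a : 'I_m -> nat)
  (lev : forall i : 'I_m, 'I_n -> 'I_(a i)) k :
  Rmx R lev k \in unitmx ->
  prj (desmx R lev k)^T = desmx R lev k *m invmx (Rmx R lev k) *m (desmx R lev k)^T.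
Proof. by move=> hU; rewrite /prj trmxK XtX pinvmxE. Qed.

Lemma Pk_split (R : realFieldType) n m (a : 'I_m -> nat)
  (lev : forall i : 'I_m, 'I_n -> 'I_(a i)) k :
  let P1 := prj (const_mx 1 : 'M[R]_(1, n)) in
  prj (desmx R lev k)^T = P1 + prj ((desmx R lev k)^T *m (1%:M - P1)).
Proof.
move=> P1; set X := (desmx R lev k)^T; set Bk := X *m (1%:M - P1).
have BkE : Bk = X - X *m P1 by rewrite /Bk mulmxBr mulmx1.
have -> : prj X = prj ((const_mx 1 : 'M[R]_(1, n)) + \sum_(i < 1) <<Bk>>)%MS.
  apply: prj_eq.
  - rewrite -(subrK (X *m P1) X) -BkE; apply: addmx_sub.
      apply: submx_trans (addsmxSr _ _); apply: (sumsmx_sup ord0) => //.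
      by rewrite genmxE.
    apply: submx_trans (addsmxSl _ _); apply: submx_trans (submxMl _ _) _.
    exact: prj_sub.
  - rewrite addsmx_sub ones_sub /=; apply/sumsmx_subP => i _; rewrite genmxE BkE.
    apply: subB_sub => //; apply: submx_trans (submxMl _ _) _.
    exact: submx_trans (prj_sub _) (ones_sub R lev k).
rewrite prj_sum ?big_ord1 //.
  move=> _ _; rewrite /Bk trmx_mul trmxK /P1 cprj_sym mulmxA mulmxBr mulmx1.
  by rewrite prj_fixW subrr mul0mx.
by move=> i j _ _; rewrite !ord1 eqxx.
Qed.

Lemma Pall_split (R : realFieldType) n m (a : 'I_m -> nat)
  (lev : forall i : 'I_m, 'I_n -> 'I_(a i)) k
  (hU : Rmx R lev k \in unitmx)
  (horth : forall i j : 'I_m, i != k -> j != k -> i != j ->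
       Nmx R lev i j = Nmx R lev i k *m invmx (Rmx R lev k) *m Nmx R lev k j) :
  let Pk := prj (desmx R lev k)^T in
  projS R lev setT
  = Pk + \sum_(j | j != k) prj ((desmx R lev j)^T *m (1%:M - Pk)).
Proof.
move=> Pk; set X := desmx R lev.
set B := fun j => (X j)^T *m (1%:M - Pk).
have BE : forall j, B j = (X j)^T - (X j)^T *m Pk by move=> j; rewrite /B mulmxBr mulmx1.
have PkU : forall j, ((X j)^T *m Pk <= (X k)^T)%MS.
  by move=> j; apply: submx_trans (submxMl _ _) _; exact: prj_sub.
rewrite projSE.
have -> : prj (spanmx R lev setT) = prj ((X k)^T + \sum_(j | j != k) <<B j>>)%MS.
  apply: prj_eq.
  - apply/sumsmx_subP => -[j|] _ /=; rewrite genmxE.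
      case: (eqVneq j k) => [->|jk]; first exact: addsmxSl.
      rewrite -(subrK ((X j)^T *m Pk) (X j)^T) -BE; apply: addmx_sub.
        apply: submx_trans (addsmxSr _ _); apply: (sumsmx_sup j) => //.
        by rewrite genmxE.
      exact: submx_trans (PkU j) (addsmxSl _ _).
    exact: submx_trans (ones_sub R lev k) (addsmxSl _ _).
  - have XV : forall j, ((X j)^T <= spanmx R lev setT)%MS.
      by move=> j; apply: (sumsmx_sup (Some j)); rewrite ?inE //= genmxE.
    rewrite addsmx_sub XV /=; apply/sumsmx_subP => j _; rewrite genmxE BE.
    by apply: subB_sub; rewrite ?XV //; apply: submx_trans (PkU j) (XV k).
rewrite prj_sum //.
  move=> j _; rewrite /B trmx_mul trmxK cprj_sym mulmxA mulmxBr mulmx1.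
  by rewrite prj_fixW subrr mul0mx.
move=> i j ik jk ij; rewrite /B trmx_mul trmxK cprj_sym.
rewrite (mulmxA ((X i)^T *m (1%:M - Pk)) (1%:M - Pk)).
rewrite -(mulmxA (X i)^T (1%:M - Pk) (1%:M - Pk)) cprj_idem.
rewrite mulmxBr mulmx1 mulmxBl.
rewrite -[(X i)^T *m X j]/(Nmx R lev i j) (horth i j) //.
rewrite /Pk Pk_E // !mulmxA -[(X i)^T *m X k]/(Nmx R lev i k).
rewrite -(mulmxA _ (X k)^T (X j)) -[(X k)^T *m X j]/(Nmx R lev k j).
by rewrite subrr.
Qed.

Lemma SStot_E (R : realFieldType) n (Y : 'cV[R]_n) :
  SStot Y = (Y^T *m (1%:M - prj (const_mx 1 : 'M[R]_(1, n))) *m Y) 0 0.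
Proof.
set ones := (const_mx 1 : 'M[R]_(1, n)).
set s := \sum_(u < n) Y u 0.
have s1 : Y^T *m ones^T = s%:M.
  apply/matrixP => i j; rewrite !ord1 !mxE /= mulr1n; apply: eq_bigr => u _.
  by rewrite !mxE mulr1.
have s2 : ones *m Y = s%:M.
  apply/matrixP => i j; rewrite !ord1 !mxE /= mulr1n; apply: eq_bigr => u _.
  by rewrite !mxE mul1r.
have oo : ones *m ones^T = (n%:R)%:M.
  apply/matrixP => i j; rewrite !ord1 !mxE /= mulr1n.
  rewrite (eq_bigr (fun _ => 1)) ?sumr_const ?card_ord //.
  by move=> u _; rewrite !mxE mulr1.
have GE : (0 < n)%N -> pinvmx (ones *m ones^T) = (n%:R^-1)%:M.
  move=> np; rewrite oo pinvmxE ?invmx_scalar //.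
  by rewrite unitmxE det_scalar1 unitfE pnatr_eq0 -lt0n.
rewrite /prj; move: GE; move: (pinvmx _) => G GE.
rewrite mulmxBr mulmx1 mulmxBl !mulmxA -(mulmxA _ ones Y) s1 s2.
rewrite mul_scalar_mx mul_mx_scalar !mxE /SStot -/s.
have -> : \sum_(u < n) Y u 0 ^+ 2 = (Y^T *m Y) 0 0.
  by rewrite !mxE; apply: eq_bigr => u _; rewrite !mxE expr2.
congr (_ - _); first by rewrite mxE.
case: (posnP n) => [n0|np].
  have -> : s = 0.
    by rewrite /s big1 // => u _; have := ltn_ord u; rewrite {2}n0.
  by rewrite expr2 !mul0r.
rewrite GE // !mxE eqxx mulr1n.
by rewrite expr2 mulrA.
Qed.

Theorem theorem4p5 (R : realFieldType) (n m : nat) (a : 'I_m -> nat)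
    (lev : forall i : 'I_m, 'I_n -> 'I_(a i)) (Y : 'cV[R]_n)
    (hm : (2 <= m)%N)
    (k : 'I_m) (hk : k = m.-1 :> nat)   (* k is the factor F_m *)
    (hlev : forall (i : 'I_m) (t : 'I_(a i)), exists u : 'I_n, lev i u = t)
    (horth : forall i j : 'I_m, i != k -> j != k -> i != j ->
       Nmx R lev i j = Nmx R lev i k *m invmx (Rmx R lev k) *m Nmx R lev k j) :
  (forall i : 'I_m, i != k ->
     Cmx R lev i [set j | j != Some i]
       = Rmx R lev i - Nmx R lev i k *m invmx (Rmx R lev k) *m (Nmx R lev i k)^T
     /\ Qvec lev Y i [set j | j != Some i]
       = Tvec lev Y i - Nmx R lev i k *m invmx (Rmx R lev k) *m Tvec lev Y k)
  /\
  SSE lev Y = SStot Y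
     - \sum_(j < m | j != k) SSi lev Y j [set Some k; None]
     - SSi lev Y k [set None].
Proof.
have hU : Rmx R lev k \in unitmx by apply: Rmx_unit => t; exact: hlev.
split.
  move=> i ik; have PX := partA hU horth ik.
  set P := projS R lev [set j | j != Some i] in PX *.
  set Ri := invmx (Rmx R lev k) in PX *.
  have Psym : P^T = P by rewrite /P projSE prj_sym.
  split.
    rewrite /Cmx mulmxBr mulmx1 mulmxBl XtX -(mulmxA (desmx R lev i)^T P) PX Ntr.
    by rewrite (mulmxA (desmx R lev i)^T (desmx R lev k *m Ri)) (mulmxA (desmx R lev i)^T (desmx R lev k)).
  have XP : (desmx R lev i)^T *m P = Nmx R lev i k *m Ri *m (desmx R lev k)^T.
    rewrite -Psym -trmx_mul PX trmx_mul Ntr trmx_mul Rinv_tr.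
    by rewrite (mulmxA (Nmx R lev i k)).
  rewrite /Qvec mulmxBr mulmx1 mulmxBl XP.
  by rewrite -(mulmxA (Nmx R lev i k *m Ri)).
have qB : forall A B : 'M[R]_n,
    (Y^T *m (A - B) *m Y) 0 0 = (Y^T *m A *m Y) 0 0 - (Y^T *m B *m Y) 0 0.
  by move=> A B; rewrite mulmxBr mulmxBl !mxE.
have qD : forall A B : 'M[R]_n,
    (Y^T *m (A + B) *m Y) 0 0 = (Y^T *m A *m Y) 0 0 + (Y^T *m B *m Y) 0 0.
  by move=> A B; rewrite mulmxDr mulmxDl !mxE.
have qS : forall (F : 'I_m -> 'M[R]_n),
    (Y^T *m (\sum_(j | j != k) F j) *m Y) 0 0 = \sum_(j | j != k) (Y^T *m F j *m Y) 0 0.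
  by move=> F; rewrite mulmx_sumr mulmx_suml summxE.
under eq_bigr => j _ do rewrite (SSi_E Y j (span_k1 R lev k)).
rewrite (SSi_E Y k (span_1 R lev)) SStot_E.
have PkS := Pk_split R lev k; simpl in PkS.
rewrite /SSE (Pall_split hU horth) /= {1}PkS.
have eB : forall A B : 'M[R]_1, (A - B) 0 0 = A 0 0 - B 0 0.
  by move=> A B; rewrite !mxE.
have eN : forall A : 'M[R]_1, (- A) 0 0 = - A 0 0.
  by move=> A; rewrite !mxE.
rewrite (qB 1%:M) !qD qS mulmx1 mulmxBr mulmx1 mulmxN mulNmx eN.
by rewrite !opprD !addrA addrAC.
Qed.
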